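(* Let $\Delta$ be a mesh and let $A\le B$ be discrete quasi-copulas on $\Delta$. Then there exists a discrete copula $C$ on $\Delta$ with $A\le C\le B$ if and only if $L^{(A,B)}(R)\ge0$ for all $R\in\mathfrak{R}$, where $\mathfrak{R}$ consists of finite formal unions of rectangles with corners in $\Delta$.
   Context: A mesh is $\Delta=\delta_x\times\delta_y$ with $\delta_x=\{0=x_0<\dots<x_p=1\}$, $\delta_y=\{0=y_0<\dots<y_q=1\}$. For $Q:\Delta\to\mathbb{R}$ and a rectangle $[s_1,s_2]\times[t_1,t_2]$ with corners in $\Delta$, $V_Q=Q(s_1,t_1)+Q(s_2,t_2)-Q(s_2,t_1)-Q(s_1,t_2)$. $Q$ is a discrete copula if it is grounded ($Q(x,0)=Q(0,y)=0$), has neutral element $1$ ($Q(x,1)=x$, $Q(1,y)=y$) and $V_Q(R)\ge0$ for all rectangles with corners in $\Delta$; a discrete quasi-copula if grounded, with neutral element 1, and $V_Q(R)\ge0$ for all rectangles with corners in $\Delta$ having a side on the boundary of $[0,1]^2$. A rectangle here is nondegenerate ($s_1<s_2$, $t_1<t_2$); main corners: southwest and northeast; opposite corners: southeast and northwest. $\mathfrak{R}$: finite formal unions $R=R_1\sqcup\dots\sqcup R_n$ of such rectangles (repetitions allowed), with multiplicity $m_R(\mathbf{y})=\sum_i m_{R_i}(\mathbf{y})$, where $m_{R_i}(\mathbf{y})$ is $1$ at main corners, $-1$ at opposite corners, $0$ elsewhere. $L^{(A,B)}(R)=\sum_{m_R(\mathbf{y})>0}B(\mathbf{y})m_R(\mathbf{y})+\sum_{m_R(\mathbf{y})<0}A(\mathbf{y})m_R(\mathbf{y})$.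 *)

(* Defs.v *)
(* Reals are modelled by an arbitrary real field R
   (the statement is order-algebraic: a linear feasibility statement). *)
From HB Require Import structures.
From mathcomp Require Import all_boot all_order all_algebra.
Set Implicit Arguments. Unset Strict Implicit. Unset Printing Implicit Defensive.
Import Order.TTheory GRing.Theory Num.Theory.
Local Open Scope ring_scope.

Definition is_partition (R : realFieldType) (n : nat) (d : 'I_n.+1 -> R) : Prop :=
  d ord0 = 0 /\ d ord_max = 1 /\
  (forall i j : 'I_n.+1, (i < j)%N -> d i < d j).

(* A function on the mesh Delta = dx x dy is represented by its values on
   grid indices: Q i j = Q(x_i, y_j). *)
Definition meshfun (R : realFieldType) (p q : nat) := 'I_p.+1 -> 'I_q.+1 -> R.

(* A rectangle [x_{i1}, x_{i2}] x [y_{j1}, y_{j2}] with corners in the mesh,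
   encoded as ((i1, i2), (j1, j2)). *)
Definition rect (p q : nat) := (('I_p.+1 * 'I_p.+1) * ('I_q.+1 * 'I_q.+1))%type.

Definition rect_i1 p q (r : rect p q) := r.1.1.
Definition rect_i2 p q (r : rect p q) := r.1.2.
Definition rect_j1 p q (r : rect p q) := r.2.1.
Definition rect_j2 p q (r : rect p q) := r.2.2.

Definition rect_ok p q (r : rect p q) : bool :=
  (rect_i1 r < rect_i2 r)%N && (rect_j1 r < rect_j2 r)%N.

Definition rect_boundary p q (r : rect p q) : bool :=
  [|| (rect_i1 r == 0%N :> nat), (rect_i2 r == p :> nat),
      (rect_j1 r == 0%N :> nat) | (rect_j2 r == q :> nat)].

Definition VQ (R : realFieldType) p q (Q : meshfun R p q) (r : rect p q) : R :=
  Q (rect_i1 r) (rect_j1 r) + Q (rect_i2 r) (rect_j2 r)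
  - Q (rect_i2 r) (rect_j1 r) - Q (rect_i1 r) (rect_j2 r).

Definition grounded (R : realFieldType) p q (Q : meshfun R p q) : Prop :=
  (forall i, Q i ord0 = 0) /\ (forall j, Q ord0 j = 0).

Definition neutral1 (R : realFieldType) p q (x : 'I_p.+1 -> R) (y : 'I_q.+1 -> R)
    (Q : meshfun R p q) : Prop :=
  (forall i, Q i ord_max = x i) /\ (forall j, Q ord_max j = y j).

Definition discrete_copula (R : realFieldType) p q (x : 'I_p.+1 -> R)
    (y : 'I_q.+1 -> R) (Q : meshfun R p q) : Prop :=
  grounded Q /\ neutral1 x y Q /\
  (forall r : rect p q, rect_ok r -> 0 <= VQ Q r).

Definition discrete_quasi_copula (R : realFieldType) p q (x : 'I_p.+1 -> R)
    (y : 'I_q.+1 -> R) (Q : meshfun R p q) : Prop :=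
  grounded Q /\ neutral1 x y Q /\
  (forall r : rect p q, rect_ok r -> rect_boundary r -> 0 <= VQ Q r).

Definition mesh_le (R : realFieldType) p q (P Q : meshfun R p q) : Prop :=
  forall i j, P i j <= Q i j.

Definition mult1 p q (r : rect p q) (i : 'I_p.+1) (j : 'I_q.+1) : int :=
  (((i == rect_i1 r) && (j == rect_j1 r)) : nat)%:Z
  + (((i == rect_i2 r) && (j == rect_j2 r)) : nat)%:Z
  - (((i == rect_i2 r) && (j == rect_j1 r)) : nat)%:Z
  - (((i == rect_i1 r) && (j == rect_j2 r)) : nat)%:Z.

(* an element of frak R: a finite formal union (list, repetitions allowed) *)
Definition mult p q (Rs : seq (rect p q)) i j : int :=
  \sum_(r <- Rs) mult1 r i j.

Definition LAB (R : realFieldType) p q (A B : meshfun R p q) (Rs : seq (rect p q)) : R :=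
  \sum_(i < p.+1) \sum_(j < q.+1)
    (if (0 < mult Rs i j)%R then B i j * (mult Rs i j)%:~R
     else if (mult Rs i j < 0)%R then A i j * (mult Rs i j)%:~R else 0).

(* Main.v *)
Require Import Defs.
From HB Require Import structures.
From mathcomp Require Import all_boot all_order all_algebra.
From mathcomp Require Import ring lra.
Import Order.TTheory GRing.Theory Num.Theory.
Local Open Scope ring_scope.
Set Implicit Arguments. Unset Strict Implicit.

Definition cstr (V : finType) (R : realFieldType) := ((V -> int) * R)%type.

Definition dot (V : finType) (R : realFieldType) (a : V -> int) (x : V -> R) : R :=
  \sum_u (a u)%:~R * x u.

Definition zeroc (V : finType) (R : realFieldType) : cstr V R := (fun _ => 0%R, 0%R).

Inductive deriv (V : finType) (R : realFieldType) (I : finType) (f : I -> cstr V R)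
  : cstr V R -> Prop :=
| dv_base i : deriv f (f i)
| dv_zero : deriv f (zeroc V R)
| dv_add c d : deriv f c -> deriv f d -> deriv f (fun u => c.1 u + d.1 u, c.2 + d.2)
| dv_ext c d : deriv f c -> (forall u, c.1 u = d.1 u) -> c.2 = d.2 -> deriv f d.

Lemma int_mulPosz (x : int) (k : nat) : x * Posz k = x *+ k.
Proof. by rewrite -mulr_natr natz. Qed.

Lemma dv_scale (V : finType) (R : realFieldType) (I : finType) (f : I -> cstr V R) c (k : nat) :
  deriv f c -> deriv f (fun u => c.1 u * Posz k, c.2 * k%:R).
Proof.
move=> dc; elim: k => [|k IH].
  apply: dv_ext (dv_zero f) _ _ => [u|] /=; by rewrite mulr0.
apply: dv_ext (dv_add dc IH) _ _ => [u|] /=.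
  by rewrite !int_mulPosz mulrS.
by rewrite mulrS mulrDr mulr1.
Qed.

Lemma interval (R : realFieldType) (L H : seq R) :
  (forall a b, a \in L -> b \in H -> a <= b) ->
  exists t, (forall a, a \in L -> a <= t) /\ (forall b, b \in H -> t <= b).
Proof.
elim: L => [|l L IH] hLH.
  elim: H {hLH} => [|h H [t [_ Ht]]]; first by exists 0.
  exists (Num.min h t); split => // b; rewrite in_cons => /orP[/eqP->|bH].
    by rewrite ge_min lexx.
  by rewrite ge_min Ht ?orbT.
have [t [Lt Ht]] : exists t, (forall a, a \in L -> a <= t) /\ (forall b, b \in H -> t <= b).
  by apply: IH => a b aL bH; apply: hLH => //; rewrite in_cons aL orbT.
exists (Num.max l t); split.
  move=> a; rewrite in_cons => /orP[/eqP->|aL]; first by rewrite le_max lexx.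
  by rewrite le_max Lt ?orbT.
move=> b bH; rewrite ge_max Ht // andbT; apply: hLH => //; by rewrite in_cons eqxx.
Qed.

Lemma dot_upd (V : finType) (R : realFieldType) (a : V -> int) (x : V -> R) v t :
  dot a (fun u => if u == v then t else x u) = dot a x - (a v)%:~R * x v + (a v)%:~R * t.
Proof.
rewrite /dot (bigD1 v) //= eqxx [in RHS](bigD1 v) //=.
have -> : \sum_(i | i != v) (a i)%:~R * (if i == v then t else x i) =
          \sum_(i | i != v) (a i)%:~R * x i.
  by apply: eq_bigr => i /negbTE ->.
ring.
Qed.

Lemma dot_comb (V : finType) (R : realFieldType) (a b : V -> int) (k l : int) (x : V -> R) :
  dot (fun u => a u * k + b u * l) x = k%:~R * dot a x + l%:~R * dot b x.
Proof.
rewrite /dot !mulr_sumr -big_split /=; apply: eq_bigr => u _.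
rewrite intrD !intrM; ring.
Qed.

Lemma dot0 (V : finType) (R : realFieldType) (a : V -> int) (x : V -> R) :
  (forall u, a u = 0) -> dot a x = 0.
Proof. by move=> h; rewrite /dot big1 // => u _; rewrite h mul0r. Qed.

Lemma FM (V : finType) (R : realFieldType) (n : nat) : forall (S : {set V}) (I : finType)
  (f : I -> cstr V R),
  #|S| = n ->
  (forall i v, v \notin S -> (f i).1 v = 0) ->
  (forall c, deriv f c -> (forall u, c.1 u = 0) -> c.2 <= 0) ->
  exists x : V -> R, forall i, (f i).2 <= dot (f i).1 x.
Proof.
elim: n => [|n IH] S I f hS hsupp hder.
  have S0 := cards0_eq hS.
  exists (fun _ => 0) => i; rewrite dot0; last by move=> u; apply: hsupp; rewrite S0 inE.
  by apply: hder; [apply: dv_base | move=> u; apply: hsupp; rewrite S0 inE].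
have : S != set0 by rewrite -card_gt0 hS.
case/set0Pn => v vS.
pose S' := S :\ v.
have hS' : #|S'| = n by move: hS; rewrite (cardsD1 v) vS add1n => -[].
pose comb i j : cstr V R := (fun u => (f i).1 u * (- (f j).1 v) + (f j).1 u * (f i).1 v,
   (- (f j).1 v)%:~R * (f i).2 + ((f i).1 v)%:~R * (f j).2).
pose pos i := 0 < (f i).1 v.
pose neg i := (f i).1 v < 0.
pose f' (k : (I + I * I)%type) : cstr V R :=
  match k with
  | inl i => if (f i).1 v == 0 then f i else zeroc V R
  | inr ij => if pos ij.1 && neg ij.2 then comb ij.1 ij.2 else zeroc V R
  end.
have transfer : forall c, deriv f' c -> deriv f c.
  move=> c; elim => [k| |c1 d1 _ h1 _ h2|c1 d1 _ h1 e1 e2].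
  - case: k => [i|[i j]] /=.
      by case: ifP => _; [apply: dv_base|apply: dv_zero].
    case: ifP => [/andP[pi nj]|_]; last by apply: dv_zero.
    have [k1 ek1] : exists k1 : nat, - (f j).1 v = Posz k1.
      by exists `|- (f j).1 v|%N; rewrite gez0_abs // oppr_ge0 ltW.
    have [k2 ek2] : exists k2 : nat, (f i).1 v = Posz k2.
      by exists `|(f i).1 v|%N; rewrite gez0_abs // ltW.
    apply: dv_ext (dv_add (dv_scale k1 (dv_base f i)) (dv_scale k2 (dv_base f j))) _ _.
      by move=> u /=; rewrite /comb /= ek1 ek2.
    rewrite /comb /= ek1 ek2 -!pmulrn; ring.
  - exact: dv_zero.
  - exact: dv_add.
  - exact: dv_ext h1 e1 e2.
have [x' hx'] : exists x' : V -> R, forall k, (f' k).2 <= dot (f' k).1 x'.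
  apply: (IH S') => //.
    move=> [i|[i j]] u; rewrite !inE negb_and negbK => /orP[/eqP->|uS] /=.
    - by case: ifP => [/eqP|].
    - by case: ifP => _ //; rewrite hsupp.
    - by case: ifP => _ //=; rewrite mulrN (mulrC ((f j).1 v)) addNr.
    - by case: ifP => _ //=; rewrite (hsupp i u) // (hsupp j u) // !mul0r addr0.
  by move=> c /transfer; apply: hder.
pose s i := dot (f i).1 x' - ((f i).1 v)%:~R * x' v.
pose lo i := ((f i).2 - s i) / ((f i).1 v)%:~R.
pose hi j := (s j - (f j).2) / (- (f j).1 v)%:~R.
have hI : forall a b, a \in [seq lo i | i <- enum I & pos i] -> b \in [seq hi j | j <- enum I & neg j] -> a <= b.
  move=> a b /mapP[i]; rewrite mem_filter => /andP[pi _] ->.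
  move=> /mapP[j]; rewrite mem_filter => /andP[nj _] ->.
  have := hx' (inr (i,j)); rewrite /= pi nj /= dot_comb.
  have mpos : (0:R) < ((f i).1 v)%:~R by rewrite ltr0z.
  have npos : (0:R) < (- (f j).1 v)%:~R by rewrite ltr0z oppr_gt0.
  rewrite /lo /hi ler_pdivrMr // mulrAC ler_pdivlMr // /s intrN.
  move: mpos npos; rewrite intrN; nra.
have [t [Lt Ht]] := interval hI.
exists (fun u => if u == v then t else x' u) => i.
rewrite dot_upd.
case: (ltgtP ((f i).1 v) 0) => [ni|pi|z].
- have mi : hi i \in [seq hi j | j <- enum I & neg j].
    by apply: map_f; rewrite mem_filter mem_enum andbT.
  have := Ht _ mi.
  have npos : (0:R) < (- (f i).1 v)%:~R by rewrite ltr0z oppr_gt0.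
  rewrite /hi ler_pdivlMr // /s.
  move: npos; rewrite intrN; nra.
- have mi : lo i \in [seq lo j | j <- enum I & pos j].
    by apply: map_f; rewrite mem_filter mem_enum andbT.
  have := Lt _ mi.
  have mpos : (0:R) < ((f i).1 v)%:~R by rewrite ltr0z.
  rewrite /lo ler_pdivrMr // /s.
  move: mpos; nra.
- have := hx' (inl i); rewrite /= z eqxx /= => h.
  by rewrite !mul0r subr0 addr0.
Qed.

Definition Vt (p q : nat) := ('I_p.+1 * 'I_q.+1)%type.

Definition ind (p q : nat) (w : Vt p q) (u : Vt p q) : int := ((u == w) : nat)%:Z.

Definition sysf (R : realFieldType) p q (A B : meshfun R p q)
  (k : (rect p q + Vt p q + Vt p q)%type) : cstr (Vt p q) R :=
  match k with
  | inl (inl r) => if rect_ok r then ((fun u : Vt p q => mult1 r u.1 u.2), 0) else zeroc _ R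
  | inl (inr w) => (ind w, A w.1 w.2)
  | inr w => ((fun u => - ind w u), - B w.1 w.2)
  end.

Lemma sum_ind (R : realFieldType) p q (w : Vt p q) (F : Vt p q -> R) :
  \sum_u (ind w u)%:~R * F u = F w.
Proof.
rewrite (bigD1 w) //= big1 => [|u /negbTE]; rewrite /ind ?eqxx.
  by rewrite mul1r addr0.
by move=> ->; rewrite mul0r.
Qed.

Lemma dotN (V : finType) (R : realFieldType) (a : V -> int) (x : V -> R) :
  dot (fun u => - a u) x = - dot a x.
Proof. by rewrite /dot -sumrN; apply: eq_bigr => u _; rewrite intrN mulNr. Qed.

Lemma dot_mult1 (R : realFieldType) p q (r : rect p q) (x : Vt p q -> R) :
  dot (fun u : Vt p q => mult1 r u.1 u.2) x = VQ (fun i j => x (i, j)) r.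
Proof.
rewrite /dot.
have E : forall u : Vt p q, (mult1 r u.1 u.2)%:~R * x u =
   (ind (rect_i1 r, rect_j1 r) u)%:~R * x u + (ind (rect_i2 r, rect_j2 r) u)%:~R * x u
   - (ind (rect_i2 r, rect_j1 r) u)%:~R * x u - (ind (rect_i1 r, rect_j2 r) u)%:~R * x u.
  move=> [i j]; rewrite /mult1 /ind /= !xpair_eqE !intrD !intrN; ring.
rewrite (eq_bigr _ (fun u _ => E u)) !sumrB big_split /= !sum_ind /VQ.
by [].
Qed.

Lemma dot_mult (R : realFieldType) p q (Rs : seq (rect p q)) (x : Vt p q -> R) :
  dot (fun u : Vt p q => mult Rs u.1 u.2) x = \sum_(r <- Rs) dot (fun u : Vt p q => mult1 r u.1 u.2) x.
Proof.
rewrite /dot /mult (exchange_big_dep xpredT) //=; apply: eq_bigr => u _.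
by rewrite rmorph_sum mulr_suml.
Qed.

Definition gg (R : realFieldType) p q (A B : meshfun R p q) (d : int) (u : Vt p q) : R :=
  if 0 <= d then d%:~R * A u.1 u.2 else d%:~R * B u.1 u.2.

Definition GG (R : realFieldType) p q (A B : meshfun R p q) (Rs : seq (rect p q))
  (a : Vt p q -> int) : R :=
  \sum_u gg A B (a u - mult Rs u.1 u.2) u.

Lemma gg_le (R : realFieldType) p q (A B : meshfun R p q) d u :
  mesh_le A B -> gg A B d u <= d%:~R * A u.1 u.2 /\ gg A B d u <= d%:~R * B u.1 u.2.
Proof.
move=> hAB; have hu := hAB u.1 u.2; rewrite /gg; case: ifP => h.
  have : (0:R) <= d%:~R by rewrite ler0z.
  split => //; nra.
have : (d%:~R : R) < 0 by rewrite ltrz0 ltNge h.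
split => //; nra.
Qed.

Lemma gg_add (R : realFieldType) p q (A B : meshfun R p q) d1 d2 u :
  mesh_le A B -> gg A B d1 u + gg A B d2 u <= gg A B (d1 + d2) u.
Proof.
move=> hAB; have [h1 h1'] := gg_le d1 u hAB; have [h2 h2'] := gg_le d2 u hAB.
rewrite {3}/gg intrD; case: ifP => _; rewrite mulrDl; [exact: (lerD h1 h2) | exact: (lerD h1' h2')].
Qed.

Lemma gg0 (R : realFieldType) p q (A B : meshfun R p q) u : gg A B 0 u = 0.
Proof. by rewrite /gg lexx mul0r. Qed.

Lemma mult_nil p q (i : 'I_p.+1) (j : 'I_q.+1) : mult [::] i j = 0.
Proof. by rewrite /mult big_nil. Qed.

Lemma mult_cat p q (Rs1 Rs2 : seq (rect p q)) i j :
  mult (Rs1 ++ Rs2) i j = mult Rs1 i j + mult Rs2 i j.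
Proof. by rewrite /mult big_cat. Qed.

Lemma inv_deriv (R : realFieldType) p q (A B : meshfun R p q) c :
  mesh_le A B -> deriv (sysf A B) c ->
  exists Rs, all (@rect_ok p q) Rs /\ c.2 <= GG A B Rs c.1.
Proof.
move=> hAB; elim => [k| |c1 d1 _ [Rs1 [ok1 h1]] _ [Rs2 [ok2 h2]]|c1 d1 _ [Rs [ok h]] e1 e2].
- case: k => [[r|w]|w] /=.
  + case: ifP => okr.
      exists [:: r]; split; first by rewrite /= okr.
      rewrite /GG big1 // => u _; by rewrite /mult big_seq1 subrr gg0.
    exists [::]; split => //; rewrite /GG big1 // => u _; by rewrite mult_nil subrr gg0.
  + exists [::]; split => //; rewrite /GG (bigD1 w) //= big1 => [|u /negbTE].
      by rewrite mult_nil /ind eqxx subr0 /gg /= mul1r addr0.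
    by rewrite mult_nil /ind => ->; rewrite subrr gg0.
  + exists [::]; split => //; rewrite /GG (bigD1 w) //= big1 => [|u /negbTE].
      by rewrite mult_nil /ind eqxx subr0 /gg /= mulN1r addr0.
    by rewrite mult_nil /ind => ->; rewrite subrr gg0.
- exists [::]; split => //; rewrite /GG big1 // => u _; by rewrite mult_nil subrr gg0.
- exists (Rs1 ++ Rs2); split; first by rewrite all_cat ok1 ok2.
  apply: (le_trans (lerD h1 h2)); rewrite /GG -big_split /=; apply: ler_sum => u _.
  rewrite mult_cat.
  have -> : c1.1 u + d1.1 u - (mult Rs1 u.1 u.2 + mult Rs2 u.1 u.2) =
    (c1.1 u - mult Rs1 u.1 u.2) + (d1.1 u - mult Rs2 u.1 u.2) by ring.
  exact: gg_add.
- exists Rs; split => //; rewrite -e2; apply: (le_trans h); rewrite /GG le_eqVlt; apply/orP; left.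
  by apply/eqP; apply: eq_bigr => u _; rewrite e1.
Qed.

Lemma GG_zero (R : realFieldType) p q (A B : meshfun R p q) Rs (a : Vt p q -> int) :
  (forall u, a u = 0) -> GG A B Rs a = - LAB A B Rs.
Proof.
move=> a0; rewrite /LAB pair_bigA /= -sumrN /GG; apply: eq_bigr => -[i j] _ /=.
rewrite a0 sub0r /gg; set M := mult Rs i j.
case: (ltgtP M 0) => [Mn|Mp|->].
- by rewrite oppr_ge0 (ltW Mn) /= intrN; ring.
- by rewrite oppr_ge0 leNgt Mp /= intrN; ring.
- by rewrite oppr0 lexx !mul0r oppr0.
Qed.

Theorem mainTheorem14 (R : realFieldType) (p q : nat)
    (x : 'I_p.+1 -> R) (y : 'I_q.+1 -> R) (A B : meshfun R p q) :
  is_partition x -> is_partition y ->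
  discrete_quasi_copula x y A -> discrete_quasi_copula x y B ->
  mesh_le A B ->
  (exists C : meshfun R p q,
      discrete_copula x y C /\ mesh_le A C /\ mesh_le C B)
  <->
  (forall Rs : seq (rect p q), all (@rect_ok p q) Rs -> 0 <= LAB A B Rs).
Proof.
move=> _ _ [[gA1 gA2] [[nA1 nA2] _]] [[gB1 gB2] [[nB1 nB2] _]] hAB; split.
- move=> [C [[_ [_ vq]] [hAC hCB]]] Rs ok.
  have E : \sum_(i < p.+1) \sum_(j < q.+1) ((mult Rs i j)%:~R * C i j) = \sum_(r <- Rs) VQ C r.
    rewrite pair_bigA /=.
    have := dot_mult Rs (fun u : Vt p q => C u.1 u.2); rewrite /dot => ->.
    by apply: eq_bigr => r _; rewrite -/(dot _ _) dot_mult1.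
  have : 0 <= \sum_(r <- Rs) VQ C r.
    by rewrite big_seq; apply: sumr_ge0 => r /(allP ok) okr; apply: vq.
  rewrite -E => h; apply: (le_trans h); rewrite /LAB.
  apply: ler_sum => i _; apply: ler_sum => j _.
  have h1 := hAC i j; have h2 := hCB i j.
  case: (ltgtP (mult Rs i j) 0) => [Mn|Mp|->].
  +
    have : ((mult Rs i j)%:~R : R) < 0 by rewrite ltrz0.
    nra.
  + have : (0:R) < (mult Rs i j)%:~R by rewrite ltr0z.
    nra.
  + by rewrite mul0r.
- move=> hL.
  have [X hX] : exists X : Vt p q -> R, forall k, (sysf A B k).2 <= dot (sysf A B k).1 X.
    apply: (@FM _ _ #|[set: Vt p q]| [set: Vt p q]) => //.
      by move=> k v; rewrite inE.
    move=> c dc z; have [Rs [ok le]] := inv_deriv hAB dc.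
    rewrite GG_zero // in le; have := hL Rs ok; lra.
  pose C : meshfun R p q := fun i j => X (i, j).
  have lowA : mesh_le A C.
    by move=> i j; have := hX (inl (inr (i, j))); rewrite /= /dot sum_ind.
  have upB : mesh_le C B.
    move=> i j; have := hX (inr (i, j)); rewrite /= dotN /dot sum_ind.
    by rewrite lerN2.
  exists C; split; last by split.
  split; [split|split; [split|]].
  + move=> i; apply/le_anti/andP; split; [rewrite -(gB1 i); exact: upB | rewrite -(gA1 i); exact: lowA].
  + move=> j; apply/le_anti/andP; split; [rewrite -(gB2 j); exact: upB | rewrite -(gA2 j); exact: lowA].
  + move=> i; apply/le_anti/andP; split; [rewrite -(nB1 i); exact: upB | rewrite -(nA1 i); exact: lowA].
  + move=> j; apply/le_anti/andP; split; [rewrite -(nB2 j); exact: upB | rewrite -(nA2 j); exact: lowA].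
  + move=> r ok; have := hX (inl (inl r)); rewrite /= ok dot_mult1.
    by [].
Qed.
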